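(* Let $\Phi,\Psi$ be join doctrines such that $\Psi^{\mathrm{op}}$-meets commute with $\Phi$-joins in $2$. The following are equivalent: (i) for every poset $X$, $\mathcal{L}(X)$ is generated under $\Phi$-joins by $\Psi(X)$; (ii) for every $\Psi$-suplattice $X$, $\Phi(X)$ consists precisely of all $\Psi$-ideals of $X$; (iii) for every poset $X$ there is a sub-$\Psi$-suplattice $\Psi'(X)\subseteq\mathcal{L}(X)$ containing all principal ideals ${\downarrow}x$ such that $\Phi(\Psi'(X))$ contains all $\Psi$-ideals of $\Psi'(X)$. If these hold, then for every poset $X$, $\Psi(X)=\mathcal{L}(X)_\Phi=\Phi^*(X)$, $\mathcal{L}(X)\cong\Phi(\Psi(X))$ is $\Phi$-algebraic, $\Phi$ is a continuous join doctrine, and $\Phi=\Psi^*$.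
   Context: A join doctrine is a class $\Phi$ of posets such that: (1) the one-element poset is in $\Phi$; (2) if a poset $P$ is the union of a set $\mathcal{S}$ of subposets each in $\Phi$ and $\mathcal{S}$ (ordered by inclusion) is in $\Phi$, then $P\in\Phi$; (3) if $f:P\to Q$ is monotone with cofinal image and $P\in\Phi$ then $Q\in\Phi$; (4) cofinal subposets of members of $\Phi$ are in $\Phi$. For a poset $X$, $\mathcal{L}(X)$ = lower subsets ordered by inclusion, $\Phi(X)$ = lower subsets belonging (as subposets) to $\Phi$. A $\Phi$-join is a join of a subset in $\Phi$; a $\Psi$-suplattice is a poset with all $\Psi$-joins; a $\Psi$-ideal is a lower subset closed under $\Psi$-joins; a sub-$\Psi$-suplattice is a subset closed under $\Psi$-joins. ''Generated under $\Phi$-joins by $S$'' means the smallest subset containing $S$ and closed under $\Phi$-joins is everything. In a $\Phi$-suplattice $Y$: $\Downarrow y=\bigcap\{\phi\in\Phi(Y)\mid y\le\bigvee\phi\}$, $y$ is $\Phi$-compact if $y\in\Downarrow y$, $Y_\Phi$ = set of $\Phi$-compact elements; $\Phi$-algebraic means generated under $\Phi$-joins by $Y_\Phi$. $\Phi^*(X):=\mathcal{L}(X)_\Phi$; $\Phi^*$ also denotes the class of posets $\psi$ with $\psi\in\Phi^*(\psi)$, similarly $\Psi^*$. ''$\Psi^{\mathrm{op}}$-meets commute with $\Phi$-joins in $2$'': for all posets $X,Y$, $\phi\in\Phi(Y)$, $\psi\in\Psi(X)$ and monotone $F:X^{\mathrm{op}}\times Y\to 2$, $\bigwedge_{x\in\psi}\bigvee_{y\in\phi}F(x,y)=\bigvee_{y\in\phi}\bigwedge_{x\in\psi}F(x,y)$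 (equivalently $\Psi(X)\subseteq\Phi^*(X)$ for all $X$). $\Phi$ is a continuous join doctrine if $\mathcal{L}(X)$ is $\Phi$-continuous for every poset $X$, i.e. each $\theta\in\mathcal{L}(X)$ has $\phi\in\Phi(\mathcal{L}(X))$ with $\phi\subseteq\Downarrow\theta$ and $\theta\subseteq\bigcup\phi$. *)

(* Defs.v *)
From Stdlib Require Import FunctionalExtensionality PropExtensionality ProofIrrelevance.

Set Implicit Arguments.
Unset Strict Implicit.

Record Poset := {
  car :> Type;
  le : car -> car -> Prop;
  le_refl : forall x, le x x;
  le_trans : forall x y z, le x y -> le y z -> le x z;
  le_antisym : forall x y, le x y -> le y x -> x = y }.

Arguments le {p} _ _.

Definition Class := Poset -> Prop.

Definition incl {T : Type} (A B : T -> Prop) := forall x, A x -> B x.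

Definition subposet (X : Poset) (S : X -> Prop) : Poset.
Proof.
  refine {| car := {x : X | S x};
            le := fun a b => le (proj1_sig a) (proj1_sig b) |}.
  - intros x; apply le_refl.
  - intros x y z; apply le_trans.
  - intros [x hx] [y hy] h1 h2; simpl in *.
    pose proof (le_antisym h1 h2); subst y.
    f_equal; apply proof_irrelevance.
Defined.
Arguments subposet : clear implicits.

Definition powposet (T : Type) : Poset.
Proof.
  refine {| car := T -> Prop; le := @incl T |}.
  - intros A x h; exact h.
  - intros A B C h1 h2 x h; exact (h2 x (h1 x h)).
  - intros A B h1 h2; apply functional_extensionality; intros x;
      apply propositional_extensionality; split; auto.
Defined.

Definition unitposet : Poset.
Proof.
  refine {| car := unit; le := fun _ _ => True |}; auto.
  intros [] [] _ _; reflexivity.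
Defined.

Definition monotone (P Q : Poset) (f : P -> Q) :=
  forall a b, le a b -> le (f a) (f b).

Definition cofinal (P : Poset) (S : P -> Prop) :=
  forall x, exists y, S y /\ le x y.

Definition image (P Q : Type) (f : P -> Q) : Q -> Prop :=
  fun y => exists x, f x = y.

Definition JoinDoctrine (Phi : Class) : Prop :=
  Phi unitposet /\
  (forall (X : Poset) (SS : (X -> Prop) -> Prop),
      (forall A, SS A -> Phi (subposet X A)) ->
      Phi (subposet (powposet X) SS) ->
      (forall x, exists A, SS A /\ A x) ->
      Phi X) /\
  (forall (P Q : Poset) (f : P -> Q),
      monotone f -> cofinal (image f) -> Phi P -> Phi Q) /\
  (forall (P : Poset) (S : P -> Prop), cofinal S -> Phi P -> Phi (subposet P S)).

Definition lower (X : Poset) (A : X -> Prop) :=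
  forall x y : X, le x y -> A y -> A x.

Definition LL (X : Poset) : Poset := subposet (powposet X) (@lower X).

(** Phi(X), as a predicate on L(X). *)
Definition PhiOf (Phi : Class) (X : Poset) : LL X -> Prop :=
  fun A => Phi (subposet X (proj1_sig A)).
Arguments PhiOf : clear implicits.

Lemma down_lower (X : Poset) (x : X) : lower (fun y => le y x).
Proof. intros a b h1 h2; eapply le_trans; eassumption. Qed.

Definition down (X : Poset) (x : X) : LL X :=
  exist (@lower X) (fun y => le y x) (@down_lower X x).

Lemma top_lower (X : Poset) : lower (fun _ : X => True).
Proof. intros x y _ _; exact I. Qed.

Definition topL (X : Poset) : LL X := exist (@lower X) (fun _ => True) (@top_lower X).

Definition is_ub (X : Poset) (S : X -> Prop) (s : X) := forall x, S x -> le x s.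
Definition is_join (X : Poset) (S : X -> Prop) (s : X) :=
  is_ub S s /\ forall t, is_ub S t -> le s t.

Definition suplattice (Psi : Class) (X : Poset) :=
  forall S : X -> Prop, Psi (subposet X S) -> exists s, is_join S s.

Definition closed_joins (Psi : Class) (X : Poset) (T : X -> Prop) :=
  forall (S : X -> Prop) (s : X), incl S T -> Psi (subposet X S) -> is_join S s -> T s.

Definition ideal (Psi : Class) (X : Poset) (I : X -> Prop) :=
  lower I /\ closed_joins Psi I.

Definition generated (Phi : Class) (X : Poset) (G : X -> Prop) :=
  forall T : X -> Prop, incl G T -> closed_joins Phi T -> forall x, T x.

Definition Ddown (Phi : Class) (Y : Poset) (y : Y) : Y -> Prop :=
  fun a => forall phi : Y -> Prop, lower phi -> Phi (subposet Y phi) ->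
    forall s, is_join phi s -> le y s -> phi a.
Arguments Ddown : clear implicits.

Definition compact (Phi : Class) (Y : Poset) (y : Y) := Ddown Phi Y y y.
Arguments compact : clear implicits.

Definition algebraic (Phi : Class) (Y : Poset) :=
  suplattice Phi Y /\ generated Phi (compact Phi Y).

Definition PhiStar (Phi : Class) (X : Poset) : LL X -> Prop := compact Phi (LL X).
Arguments PhiStar : clear implicits.

Definition StarClass (Psi : Class) : Class :=
  fun P => PhiStar Psi P (topL P).

Definition commute_in_2 (Psi Phi : Class) :=
  forall (X Y : Poset) (phi : Y -> Prop) (psi : X -> Prop),
    lower phi -> Phi (subposet Y phi) ->
    lower psi -> Psi (subposet X psi) ->
    forall F : X -> Y -> Prop,
      (forall x x' y y', le x' x -> le y y' -> F x y -> F x' y') ->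
      ((forall x, psi x -> exists y, phi y /\ F x y) <->
       (exists y, phi y /\ forall x, psi x -> F x y)).

Definition continuous_doctrine (Phi : Class) :=
  forall (X : Poset) (theta : LL X),
    exists phi : LL X -> Prop,
      lower phi /\ Phi (subposet (LL X) phi) /\
      incl phi (Ddown Phi (LL X) theta) /\
      (forall x, proj1_sig theta x -> exists a, phi a /\ proj1_sig a x).

Definition order_iso (X Y : Poset) :=
  exists (f : X -> Y) (g : Y -> X),
    monotone f /\ monotone g /\ (forall x, g (f x) = x) /\ (forall y, f (g y) = y).

Definition PsiPoset (Psi : Class) (X : Poset) : Poset := subposet (LL X) (PhiOf Psi X).

Definition PhiPoset (Phi : Class) (Y : Poset) : Poset := subposet (LL Y) (PhiOf Phi Y).

(* Main.v *)
Require Import Defs.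
From Stdlib Require Import FunctionalExtensionality PropExtensionality ProofIrrelevance Classical ClassicalEpsilon.
Set Implicit Arguments.
Unset Strict Implicit.

Lemma le_sub (X : Poset) (A : X -> Prop) (a b : subposet X A) :
  le a b = le (proj1_sig a) (proj1_sig b).
Proof. reflexivity. Qed.
Lemma le_LL (X : Poset) (a b : LL X) :
  le a b = incl (proj1_sig a) (proj1_sig b).
Proof. reflexivity. Qed.
Lemma le_pow (T : Type) (a b : powposet T) : le a b = incl a b.
Proof. reflexivity. Qed.

Lemma pred_ext {T : Type} (A B : T -> Prop) : (forall x, A x <-> B x) -> A = B.
Proof. intros h; apply functional_extensionality; intros x;
  apply propositional_extensionality; apply h. Qed.


Lemma jd_unit (Phi : Class) : JoinDoctrine Phi -> Phi unitposet.
Proof. intros [h _]; exact h. Qed.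
Lemma jd_union (Phi : Class) (JD : JoinDoctrine Phi)
  (X : Poset) (SS : (X -> Prop) -> Prop) :
      (forall A, SS A -> Phi (subposet X A)) ->
      Phi (subposet (powposet X) SS) ->
      (forall x, exists A, SS A /\ A x) ->
      Phi X.
Proof. destruct JD as [_ [h _]]; apply h. Qed.
Lemma jd_img (Phi : Class) (JD : JoinDoctrine Phi)
  (P Q : Poset) (f : P -> Q) :
      monotone f -> cofinal (image f) -> Phi P -> Phi Q.
Proof. destruct JD as [_ [_ [h _]]]; apply h. Qed.
Lemma jd_cof (Phi : Class) (JD : JoinDoctrine Phi)
  (P : Poset) (S : P -> Prop) : cofinal S -> Phi P -> Phi (subposet P S).
Proof. destruct JD as [_ [_ [_ h]]]; apply h. Qed.

Lemma top_in (Phi : Class) (JD : JoinDoctrine Phi) (P : Poset) (t : P) :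
  (forall x, le x t) -> Phi P.
Proof.
  intros ht. apply (jd_img JD (f := fun _ : unitposet => t)).
  - intros a b _; apply le_refl.
  - intros x; exists t; split; [exists tt; reflexivity | apply ht].
  - apply jd_unit; exact JD.
Qed.

Lemma transfer (Phi : Class) (JD : JoinDoctrine Phi) (P X : Poset) (A : X -> Prop)
  (f : P -> X) : monotone f -> (forall p, A (f p)) ->
  (forall x, A x -> exists p, le x (f p)) -> Phi P -> Phi (subposet X A).
Proof.
  intros Hm HA Hc HP.
  apply (jd_img JD (f := fun p => (exist A (f p) (HA p) : subposet X A))).
  - intros a b h; rewrite le_sub; simpl; apply Hm; exact h.
  - intros [x hx]. destruct (Hc x hx) as [p hp].
    exists (exist A (f p) (HA p)); split; [exists p; reflexivity | exact hp].
  - exact HP.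
Qed.

Lemma transfer_full (Phi : Class) (JD : JoinDoctrine Phi) (P Q : Poset)
  (f : P -> Q) : monotone f -> (forall q, exists p, le q (f p)) -> Phi P -> Phi Q.
Proof.
  intros Hm Hc HP. apply (jd_img JD (f := f)); auto.
  intros q; destruct (Hc q) as [p hp]; exists (f p); split; auto; exists p; auto.
Qed.

Lemma phi_ext (Phi : Class) (X : Poset) (A B : X -> Prop) :
  (forall x, A x <-> B x) -> Phi (subposet X A) -> Phi (subposet X B).
Proof. intros h; rewrite (pred_ext h); auto. Qed.

Definition dcl (Y : Poset) (S : Y -> Prop) : Y -> Prop :=
  fun y => exists s, S s /\ le y s.

Lemma dcl_lower (Y : Poset) (S : Y -> Prop) : lower (dcl S).
Proof. intros a b h [s [hs hb]]; exists s; split; auto; eapply le_trans; eauto. Qed.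

Lemma dcl_phi (Phi : Class) (JD : JoinDoctrine Phi) (Y : Poset) (S : Y -> Prop) :
  Phi (subposet Y S) -> Phi (subposet Y (dcl S)).
Proof.
  intros h. apply (transfer JD (f := fun p : subposet Y S => proj1_sig p)); auto.
  - intros a b hab; exact hab.
  - intros p; exists (proj1_sig p); split; [exact (proj2_sig p) | apply le_refl].
  - intros y [s [hs hy]]; exists (exist S s hs); exact hy.
Qed.

Lemma union_lemma (Phi : Class) (JD : JoinDoctrine Phi) (X : Poset)
  (SS : (X -> Prop) -> Prop) :
  (forall A, SS A -> Phi (subposet X A)) ->
  Phi (subposet (powposet X) SS) ->
  Phi (subposet X (fun x => exists A, SS A /\ A x)).
Proof.
  intros H1 H2.
  set (U := fun x => exists A, SS A /\ A x).
  apply (jd_union JD (SS := fun B => exists A, SS A /\ B = (fun u : subposet X U => A (proj1_sig u)))).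
  - intros B [A [hA ->]].
    assert (HA' : forall p : subposet X A, U (proj1_sig p)).
    { intros p; exists A; split; auto; exact (proj2_sig p). }
    apply (transfer JD (f := fun p : subposet X A => (exist U (proj1_sig p) (HA' p) : subposet X U))).
    + intros a b h; exact h.
    + intros p; exact (proj2_sig p).
    + intros u hu; exists (exist A (proj1_sig u) hu); exact (le_refl (proj1_sig u)).
    + apply H1; auto.
  - apply (transfer JD (f := fun p : subposet (powposet X) SS =>
                              (fun u : subposet X U => proj1_sig p (proj1_sig u)) : powposet (subposet X U))).
    + intros a b h u hu; exact (h _ hu).
    + intros p; exists (proj1_sig p); split; auto; exact (proj2_sig p).
    + intros B [A [hA ->]]; exists (exist SS A hA); intros u hu; exact hu.
    + exact H2.
  - intros [x [A [hA hx]]]. exists (fun u : subposet X U => A (proj1_sig u)); split.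
    + exists A; auto.
    + exact hx.
Qed.

Lemma Lunion_lower (X : Poset) (S : LL X -> Prop) :
  lower (fun x => exists B : LL X, S B /\ proj1_sig B x).
Proof. intros a b h [B [hB hb]]; exists B; split; auto; exact (proj2_sig B a b h hb). Qed.

Definition Lunion (X : Poset) (S : LL X -> Prop) : LL X :=
  exist _ _ (@Lunion_lower X S).

Lemma Lunion_join (X : Poset) (S : LL X -> Prop) : is_join S (Lunion S).
Proof.
  split.
  - intros B hB x hx; exists B; auto.
  - intros t ht x [B [hB hx]]; exact (ht B hB x hx).
Qed.

Lemma join_sub (X : Poset) (S : LL X -> Prop) (s : LL X) :
  is_join S s -> forall x, proj1_sig s x -> exists B, S B /\ proj1_sig B x.
Proof. intros [_ h] x hx. exact (h (Lunion S) (proj1 (Lunion_join S)) x hx). Qed.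

Lemma join_ub (X : Poset) (S : X -> Prop) (s : X) (B : X) :
  is_join S s -> S B -> le B s.
Proof. intros [h _] hB; exact (h B hB). Qed.

Lemma LL_eq (X : Poset) (a b : LL X) : (forall x, proj1_sig a x <-> proj1_sig b x) -> a = b.
Proof. intros h; apply le_antisym; intros x; apply h. Qed.

Lemma psi_down (Psi : Class) (JD : JoinDoctrine Psi) (X : Poset) (x : X) :
  Psi (subposet X (proj1_sig (down x))).
Proof.
  apply (top_in JD (t := (exist (fun y => le y x) x (le_refl x) : subposet X (proj1_sig (down x))))).
  intros p; exact (proj2_sig p).
Qed.

Lemma compact_lemma (Phi Psi : Class) (JD : JoinDoctrine Phi) (Hc : commute_in_2 Psi Phi)
  (X : Poset) (psi : X -> Prop) (Hpl : lower psi) (Hps : Psi (subposet X psi))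
  (Y : Poset) (S : Y -> Prop) (HS : Phi (subposet Y S)) (g : Y -> X -> Prop)
  (Hgl : forall y, lower (g y)) (Hgm : forall y y', le y y' -> incl (g y) (g y'))
  (Hcov : forall x, psi x -> exists y, S y /\ g y x) :
  exists y, S y /\ incl psi (g y).
Proof.
  destruct (proj1 (Hc X Y (dcl S) psi (@dcl_lower Y S) (dcl_phi JD HS) Hpl Hps
             (fun x y => g y x) ltac:(intros x x' y y' h1 h2 h3; apply (Hgm y y' h2);
                                        exact (Hgl y _ _ h1 h3))))
    as [y [[s [hs hys]] hy]].
  - intros x hx; destruct (Hcov x hx) as [y [hy1 hy2]]; exists y; split; auto.
    exists y; split; auto; apply le_refl.
  - exists s; split; auto; intros x hx; exact (Hgm y s hys x (hy x hx)).
Qed.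

Definition phiT (Psi : Class) (X : Poset) (th : X -> Prop) : LL X -> Prop :=
  fun B => Psi (subposet X (proj1_sig B)) /\ incl (proj1_sig B) th.

Definition Kprop (Phi Psi : Class) (X : Poset) :=
  forall th : LL X, Phi (subposet (LL X) (phiT Psi (proj1_sig th))).

Lemma i_K (Phi Psi : Class) (JDf : JoinDoctrine Phi) (JDs : JoinDoctrine Psi)
  (Hc : commute_in_2 Psi Phi) :
  (forall X : Poset, generated Phi (PhiOf Psi X)) -> forall X, Kprop Phi Psi X.
Proof.
  intros Hi X th; revert th.
  refine (Hi X (fun th : LL X => Phi (subposet (LL X) (phiT Psi (proj1_sig th)))) _ _).
  - intros th hth.
    apply (top_in JDf (t := (exist _ th (conj hth (fun x h => h)) : subposet (LL X) (phiT Psi (proj1_sig th))))).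
    intros p; exact (proj2 (proj2_sig p)).
  - intros S s HST HS Hj.
    set (SS := fun A : LL X -> Prop => exists sg, S sg /\ A = phiT Psi (proj1_sig sg)).
    apply (@phi_ext Phi (LL X) (fun B => exists A, SS A /\ A B)).
    + intros B; split.
      * intros [A [[sg [hsg ->]] [hB1 hB2]]]; split; auto.
        intros x hx; exact (join_ub Hj hsg x (hB2 x hx)).
      * intros [hB1 hB2].
        destruct (compact_lemma JDf Hc (proj2_sig B) hB1 HS (g := fun y : LL X => proj1_sig y))
          as [sg [hsg hBs]].
        -- intros y; exact (proj2_sig y).
        -- intros y y' h; exact h.
        -- intros x hx; exact (join_sub Hj (hB2 x hx)).
        -- exists (phiT Psi (proj1_sig sg)); split; [exists sg; auto | split; auto].
    + apply (union_lemma JDf).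
      * intros A [sg [hsg ->]]; exact (HST sg hsg).
      * apply (transfer JDf (f := fun p : subposet (LL X) S =>
                 (phiT Psi (proj1_sig (proj1_sig p)) : powposet (LL X)))).
        -- intros a b hab B [hB1 hB2]; split; auto.
           intros x hx; exact (hab x (hB2 x hx)).
        -- intros p; exists (proj1_sig p); split; auto; exact (proj2_sig p).
        -- intros A [sg [hsg ->]]; exists (exist S sg hsg); intros B hB; exact hB.
        -- exact HS.
Qed.

Lemma K_i (Phi Psi : Class) (JDf : JoinDoctrine Phi) (JDs : JoinDoctrine Psi)
  (X : Poset) : Kprop Phi Psi X -> generated Phi (PhiOf Psi X).
Proof.
  intros HK T HT Hcl th.
  apply (Hcl (phiT Psi (proj1_sig th)) th).
  - intros B [h1 _]; exact (HT B h1).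
  - apply HK.
  - split.
    + intros B [_ h2]; exact h2.
    + intros t ht x hx.
      refine (ht (down x) (conj (psi_down JDs x) _) x (le_refl x)).
      intros y hy; exact (proj2_sig th y x hy hx).
Qed.

Lemma K_ii (Phi Psi : Class) (JDf : JoinDoctrine Phi) (JDs : JoinDoctrine Psi)
  (Hc : commute_in_2 Psi Phi) (X : Poset) : Kprop Phi Psi X -> suplattice Psi X ->
  forall A : X -> Prop, (lower A /\ Phi (subposet X A)) <-> ideal Psi A.
Proof.
  intros HK Hsup A; split.
  - intros [HAl HAp]; split; auto.
    intros S s HSA HSp Hj.
    destruct (proj1 (Hc X X A (dcl S) HAl HAp (@dcl_lower X S) (dcl_phi JDs HSp)
               (fun x y => le x y) ltac:(intros x x' y y' h1 h2 h3; eapply le_trans; [eapply le_trans; eauto | eauto])))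
      as [y [hy1 hy2]].
    + intros x [s' [hs' hx]]; exists s'; split; auto.
    + apply (HAl s y); auto.
      apply (proj2 Hj); intros z hz; apply hy2; exists z; split; auto; apply le_refl.
  - intros [HAl Hcl]; split; auto.
    pose proof (HK (exist _ A HAl)) as HKA; simpl in HKA.
    set (f := fun p : subposet (LL X) (phiT Psi A) =>
           proj1_sig (constructive_indefinite_description _
              (Hsup (proj1_sig (proj1_sig p)) (proj1 (proj2_sig p))))).
    apply (transfer JDf (f := f)).
    + intros a b hab. unfold f.
      destruct (constructive_indefinite_description _ _) as [ja hja].
      destruct (constructive_indefinite_description _ _) as [jb hjb]. simpl.
      apply (proj2 hja). intros z hz. apply (proj1 hjb). apply hab; exact hz.
    + intros p. unfold f.
      destruct (constructive_indefinite_description _ _) as [ja hja]. simpl.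
      apply (Hcl (proj1_sig (proj1_sig p)) ja); auto.
      * exact (proj2 (proj2_sig p)).
      * exact (proj1 (proj2_sig p)).
    + intros a ha.
      assert (hp : phiT Psi A (down a)).
      { split; [apply psi_down; exact JDs | intros y hy; exact (HAl y a hy ha)]. }
      exists (exist _ (down a) hp). unfold f.
      destruct (constructive_indefinite_description _ _) as [ja hja]. simpl.
      apply (proj1 hja). simpl. apply le_refl.
    + exact HKA.
Qed.

Lemma psiY_sup (Psi : Class) (JDs : JoinDoctrine Psi) (X : Poset)
  (S : PsiPoset Psi X -> Prop) : Psi (subposet (PsiPoset Psi X) S) ->
  exists u : PsiPoset Psi X, is_join S u /\
    forall x, proj1_sig (proj1_sig u) x -> exists p, S p /\ proj1_sig (proj1_sig p) x.
Proof.
  intros HS.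
  set (U := fun x => exists p : PsiPoset Psi X, S p /\ proj1_sig (proj1_sig p) x).
  assert (HUl : lower U).
  { intros a b h [p [hp hb]]; exists p; split; auto; exact (proj2_sig (proj1_sig p) a b h hb). }
  assert (HUp : Psi (subposet X U)).
  { set (SS := fun C : X -> Prop => exists p, S p /\ C = proj1_sig (proj1_sig p)).
    apply (@phi_ext Psi X (fun x => exists C, SS C /\ C x)).
    - intros x; split.
      + intros [C [[p [hp ->]] hx]]; exists p; auto.
      + intros [p [hp hx]]; exists (proj1_sig (proj1_sig p)); split; auto; exists p; auto.
    - apply (union_lemma JDs).
      + intros C [p [hp ->]]; exact (proj2_sig p).
      + apply (transfer JDs (f := fun q : subposet (PsiPoset Psi X) S =>
                 (proj1_sig (proj1_sig (proj1_sig q)) : powposet X))).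
        * intros a b hab; exact hab.
        * intros q; exists (proj1_sig q); split; auto; exact (proj2_sig q).
        * intros C [p [hp ->]]; exists (exist S p hp); intros z hz; exact hz.
        * exact HS. }
  exists (exist _ (exist _ U HUl) HUp : PsiPoset Psi X); split; [split|].
  - intros p hp x hx; exists p; auto.
  - intros t ht x [p [hp hx]]; exact (ht p hp x hx).
  - intros x hx; exact hx.
Qed.

Lemma ii_K (Phi Psi : Class) (JDf : JoinDoctrine Phi) (JDs : JoinDoctrine Psi) :
  (forall X : Poset, suplattice Psi X ->
      forall A : X -> Prop, (lower A /\ Phi (subposet X A)) <-> ideal Psi A) ->
  forall X, Kprop Phi Psi X.
Proof.
  intros Hii X th.
  set (Y := PsiPoset Psi X).
  set (A' := fun p : Y => incl (proj1_sig (proj1_sig p)) (proj1_sig th)).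
  assert (HI : ideal Psi A').
  { split.
    - intros a b hab hb x hx; exact (hb x (hab x hx)).
    - intros S s HSA HS Hj.
      destruct (psiY_sup JDs HS) as [u [Hu Hu2]].
      assert (hsu : le s u) by (apply (proj2 Hj); exact (proj1 Hu)).
      intros x hx. destruct (Hu2 x (hsu x hx)) as [p [hp hpx]].
      exact (HSA p hp x hpx). }
  assert (Hsup : suplattice Psi Y).
  { intros S HS; destruct (psiY_sup JDs HS) as [u [Hu _]]; exists u; exact Hu. }
  destruct (proj2 (Hii Y Hsup A') HI) as [_ HA].
  apply (transfer JDf (f := fun q : subposet Y A' => proj1_sig (proj1_sig q))).
  - intros a b hab; exact hab.
  - intros q; split; [exact (proj2_sig (proj1_sig q)) | exact (proj2_sig q)].
  - intros B [h1 h2].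
    exists (exist A' (exist _ B h1 : Y) h2). intros z hz; exact hz.
  - exact HA.
Qed.

Lemma ii_iii (Phi Psi : Class) :
  (forall X : Poset, suplattice Psi X ->
      forall A : X -> Prop, (lower A /\ Phi (subposet X A)) <-> ideal Psi A) ->
  forall X : Poset, exists P : LL X -> Prop,
      closed_joins Psi P /\ (forall x : X, P (down x)) /\
      (forall I : subposet (LL X) P -> Prop, ideal Psi I -> Phi (subposet _ I)).
Proof.
  intros Hii X. exists (fun _ => True). split; [intros ? ? ? ? ?; exact I | split; [intros; exact I |]].
  intros J HJ.
  assert (Hsup : suplattice Psi (subposet (LL X) (fun _ => True))).
  { intros S _.
    exists (exist _ (Lunion (fun B => exists h, S (exist _ B h))) I).
    split.
    - intros [p hp] hS x hx; exists p; split; auto; exists hp; exact hS.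
    - intros t ht x [B [[h hB] hx]]; exact (ht _ hB x hx). }
  exact (proj2 (proj2 (Hii _ Hsup J) HJ)).
Qed.

Definition discrete (T : Type) : Poset.
Proof.
  refine {| car := T; le := @eq T |}.
  - intros; reflexivity.
  - intros x y z h1 h2; congruence.
  - intros x y h _; exact h.
Defined.

Lemma le_disc (T : Type) (a b : discrete T) : le a b = (a = b).
Proof. reflexivity. Qed.

Lemma lower_false (X : Poset) : lower (fun _ : X => False).
Proof. intros x y _ h; exact h. Qed.

Lemma iii_K (Phi Psi : Class) (JDf : JoinDoctrine Phi) (JDs : JoinDoctrine Psi) :
  (forall X : Poset, exists P : LL X -> Prop,
      closed_joins Psi P /\ (forall x : X, P (down x)) /\
      (forall I : subposet (LL X) P -> Prop, ideal Psi I -> Phi (subposet _ I))) ->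
  forall X, Kprop Phi Psi X.
Proof.
  intros Hiii X th.
  set (Q := phiT Psi (proj1_sig th)).
  set (W := discrete {B : LL X | Q B}).
  destruct (Hiii W) as [P [HPc [HPd HPi]]].
  destruct (classic (exists B0, Q B0)) as [[B0 hB0] | Hno].
  2:{
    set (E := fun _ : subposet (LL W) P => False).
    assert (HE : ideal Psi E).
    { split; [intros a b _ h; exact h |].
      intros S s HSE HS Hj. exfalso. apply Hno.
      exists (exist _ (fun _ : X => False) (@lower_false X)).
      split; [| intros x h; destruct h].
      apply (transfer JDs (f := fun p : subposet _ S => False_rect X (HSE _ (proj2_sig p)))).
      - intros a; exfalso; exact (HSE _ (proj2_sig a)).
      - intros a; exfalso; exact (HSE _ (proj2_sig a)).
      - intros x h; destruct h.
      - exact HS. }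
    apply (transfer JDf (f := fun p : subposet _ E => False_rect (LL X) (proj2_sig p))).
    - intros a; destruct (proj2_sig a).
    - intros a; destruct (proj2_sig a).
    - intros B hB; exfalso; apply Hno; exists B; exact hB.
    - apply HPi; exact HE. }
  set (w0 := (exist Q B0 hB0 : W)).
  set (I := fun q : subposet (LL W) P =>
         (forall w, ~ proj1_sig (proj1_sig q) w) \/ Psi (subposet W (proj1_sig (proj1_sig q)))).
  assert (HI : ideal Psi I).
  { split.
    - intros a b hab Hb.
      destruct (classic (exists w, proj1_sig (proj1_sig a) w)) as [[w1 hw1] | hn].
      + right. destruct Hb as [Hb | Hb]; [exfalso; exact (Hb w1 (hab w1 hw1)) |].
        set (Aset := proj1_sig (proj1_sig a)).
        set (Bset := proj1_sig (proj1_sig b)).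
        apply (transfer JDs (f := fun p : subposet W Bset =>
                 if excluded_middle_informative (Aset (proj1_sig p)) then proj1_sig p else w1)).
        * intros [x1 h1] [x2 h2] h. hnf in h. simpl in h. subst x2. apply le_refl.
        * intros p. destruct (excluded_middle_informative (Aset (proj1_sig p))); auto.
        * intros w hw. exists (exist Bset w (hab w hw)). simpl.
          destruct (excluded_middle_informative (Aset w)); [reflexivity | contradiction].
        * exact Hb.
      + left. intros w hw; apply hn; exists w; exact hw.
    - intros S s HSI HS Hj.
      set (S' := fun B : LL W => exists h : P B, S (exist _ B h)).
      assert (HS' : Psi (subposet (LL W) S')).
      { apply (transfer JDs (f := fun q : subposet (subposet (LL W) P) S => proj1_sig (proj1_sig q))).
        - intros a b hab; exact hab.
        - intros [[B h] hq]; exists h; exact hq.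
        - intros B [h hS]; exists (exist S (exist P B h) hS); intros z hz; exact hz.
        - exact HS. }
      assert (HPu : P (Lunion S')).
      { apply (HPc S' (Lunion S')); auto.
        - intros B [h _]; exact h.
        - apply Lunion_join. }
      set (u := (exist P (Lunion S') HPu : subposet (LL W) P)).
      assert (hsu : le s u).
      { apply (proj2 Hj). intros [p hp] hS w hw. exists p; split; auto. exists hp; exact hS. }
      assert (hsU : forall w, proj1_sig (proj1_sig s) w ->
                 exists q, S q /\ proj1_sig (proj1_sig q) w).
      { intros w hw. destruct (hsu w hw) as [B [[h hB] hBw]].
        exists (exist P B h); split; auto. }
      assert (hUs : forall q, S q -> incl (proj1_sig (proj1_sig q)) (proj1_sig (proj1_sig s))).
      { intros q hq; exact (join_ub Hj hq). }
      destruct (classic (exists w, proj1_sig (proj1_sig s) w)) as [[w1 hw1] | hn].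
      2:{ left; intros w hw; apply hn; exists w; exact hw. }
      right.
      set (SS := fun C : W -> Prop => exists q, S q /\ C = proj1_sig (proj1_sig q) /\ exists w, C w).
      apply (@phi_ext Psi W (fun w => exists C, SS C /\ C w)).
      { intros w; split.
        - intros [C [[q [hq [-> _]]] hw]]. exact (hUs q hq w hw).
        - intros hw. destruct (hsU w hw) as [q [hq hqw]].
          exists (proj1_sig (proj1_sig q)); split; auto. exists q; split; auto; split; auto.
          exists w; exact hqw. }
      apply (union_lemma JDs).
      + intros C [q [hq [-> [w hw]]]].
        destruct (HSI q hq) as [h | h]; [exfalso; exact (h w hw) | exact h].
      + set (Q0 := subposet (subposet (LL W) P) S).
        set (N := fun r : Q0 => exists w, proj1_sig (proj1_sig (proj1_sig r)) w).
        destruct (hsU w1 hw1) as [q1 [hq1 hq1w]].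
        assert (HN : Psi (subposet Q0 N)).
        { apply (jd_cof JDs); [| exact HS].
          intros r. destruct (classic (N r)) as [hr | hr].
          - exists r; split; auto; apply le_refl.
          - exists (exist S q1 hq1); split.
            + exists w1; exact hq1w.
            + intros w hw; exfalso; apply hr; exists w; exact hw. }
        apply (transfer JDs (f := fun r : subposet Q0 N =>
                  (proj1_sig (proj1_sig (proj1_sig (proj1_sig r))) : powposet W))).
        * intros a b hab; exact hab.
        * intros r. exists (proj1_sig (proj1_sig r)). split; [exact (proj2_sig (proj1_sig r)) |].
          split; [reflexivity | exact (proj2_sig r)].
        * intros C [q [hq [-> hne]]].
          exists (exist N (exist S q hq : Q0) hne). intros z hz; exact hz.
        * exact HN. }
  pose proof (HPi I HI) as HPhiI.
  set (N2 := fun r : subposet (subposet (LL W) P) I => exists w, proj1_sig (proj1_sig (proj1_sig r)) w).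
  assert (Isg : forall w : W, I (exist P (down w) (HPd w))).
  { intros w; right; exact (psi_down JDs w). }
  assert (HN2 : Phi (subposet _ N2)).
  { apply (jd_cof JDf); [| exact HPhiI].
    intros r. destruct (classic (N2 r)) as [hr | hr].
    - exists r; split; auto; apply le_refl.
    - exists (exist I (exist P (down w0) (HPd w0)) (Isg w0)); split.
      + exists w0. simpl. reflexivity.
      + intros w hw; exfalso; apply hr; exists w; exact hw. }
  assert (Hlow : forall R : W -> Prop,
            lower (fun x => exists w : W, R w /\ proj1_sig (proj1_sig w) x)).
  { intros R a b h [w [hw hb]]; exists w; split; auto; exact (proj2_sig (proj1_sig w) a b h hb). }
  set (F := fun r : subposet (subposet (subposet (LL W) P) I) N2 =>
          (exist _ _ (Hlow (proj1_sig (proj1_sig (proj1_sig (proj1_sig r))))) : LL X)).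
  apply (transfer JDf (f := F)).
  - intros a b hab x [w [hw hx]]; exists w; split; auto.
  - intros r. set (R := proj1_sig (proj1_sig (proj1_sig (proj1_sig r)))).
    assert (HR : Psi (subposet W R)).
    { destruct (proj2_sig (proj1_sig r)) as [h | h].
      - exfalso. destruct (proj2_sig r) as [w hw]. exact (h w hw).
      - exact h. }
    split.
    + simpl. fold R.
      set (SS := fun C : X -> Prop => exists w : W, R w /\ C = proj1_sig (proj1_sig w)).
      apply (@phi_ext Psi X (fun x => exists C, SS C /\ C x)).
      { intros x; split.
        - intros [C [[w [hw ->]] hx]]; exists w; auto.
        - intros [w [hw hx]]; exists (proj1_sig (proj1_sig w)); split; auto; exists w; auto. }
      apply (union_lemma JDs).
      * intros C [w [hw ->]]. exact (proj1 (proj2_sig w)).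
      * apply (transfer JDs (f := fun p : subposet W R => (proj1_sig (proj1_sig (proj1_sig p)) : powposet X))).
        -- intros [x1 h1] [x2 h2] h. hnf in h. simpl in h. subst x2. apply le_refl.
        -- intros p; exists (proj1_sig p); split; auto; exact (proj2_sig p).
        -- intros C [w [hw ->]]; exists (exist R w hw); intros z hz; exact hz.
        -- exact HR.
    + intros x [w [hw hx]]. exact (proj2 (proj2_sig w) x hx).
  - intros B hB.
    set (w := (exist Q B hB : W)).
    exists (exist N2 (exist I (exist P (down w) (HPd w)) (Isg w)) (ex_intro (fun w1 : W => proj1_sig (down w) w1) w (le_refl w))).
    intros x hx. exists w; split; [apply le_refl | exact hx].
  - exact HN2.
Qed.

Lemma psi_compact (Phi Psi : Class) (JDf : JoinDoctrine Phi) (JDs : JoinDoctrine Psi)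
  (Hc : commute_in_2 Psi Phi) (X : Poset) (HK : Kprop Phi Psi X) (A : LL X) :
  PhiOf Psi X A <-> compact Phi (LL X) A.
Proof.
  split.
  - intros HA phi Hl Hp s Hj HAs.
    destruct (compact_lemma JDf Hc (proj2_sig A) HA Hp (g := fun y : LL X => proj1_sig y))
      as [B [hB hAB]].
    + intros y; exact (proj2_sig y).
    + intros y y' h; exact h.
    + intros x hx; exact (join_sub Hj (HAs x hx)).
    + exact (Hl A B hAB hB).
  - intros Hcomp.
    destruct (Hcomp (dcl (phiT Psi (proj1_sig A))) (@dcl_lower (LL X) _)
                (dcl_phi JDf (HK A)) A) as [C [[h1 h2] hAC]].
    + split.
      * intros B [C [[_ hC] hBC]] x hx; exact (hC x (hBC x hx)).
      * intros t ht x hx.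
        refine (ht (down x) _ x (le_refl x)).
        exists (down x); split; [split | apply le_refl].
        -- exact (psi_down JDs x).
        -- intros y hy; exact (proj2_sig A y x hy hx).
    + apply le_refl.
    + assert (E : A = C) by (apply le_antisym; [exact hAC | exact h2]).
      unfold PhiOf; rewrite E; exact h1.
Qed.

Definition fset (Psi : Class) (X : Poset) (th : LL X) : PsiPoset Psi X -> Prop :=
  fun p => incl (proj1_sig (proj1_sig p)) (proj1_sig th).

Lemma fset_lower (Psi : Class) (X : Poset) (th : LL X) : lower (@fset Psi X th).
Proof. intros a b hab hb x hx; exact (hb x (hab x hx)). Qed.

Lemma fset_phi (Phi Psi : Class) (JDf : JoinDoctrine Phi) (X : Poset)
  (HK : Kprop Phi Psi X) (th : LL X) :
  Phi (subposet (PsiPoset Psi X) (@fset Psi X th)).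
Proof.
  apply (transfer JDf (f := fun p : subposet (LL X) (phiT Psi (proj1_sig th)) =>
                           (exist _ (proj1_sig p) (proj1 (proj2_sig p)) : PsiPoset Psi X))).
  - intros a b h; exact h.
  - intros p; exact (proj2 (proj2_sig p)).
  - intros p hp. exists (exist _ (proj1_sig p) (conj (proj2_sig p) hp)). intros z hz; exact hz.
  - apply HK.
Qed.

Lemma gset_lower (Phi Psi : Class) (X : Poset) (y : PhiPoset Phi (PsiPoset Psi X)) :
  lower (fun x => exists p : PsiPoset Psi X, proj1_sig (proj1_sig y) p /\ proj1_sig (proj1_sig p) x).
Proof. intros a b h [p [hp hb]]; exists p; split; auto; exact (proj2_sig (proj1_sig p) a b h hb). Qed.

Lemma iso_part (Phi Psi : Class) (JDf : JoinDoctrine Phi) (JDs : JoinDoctrine Psi)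
  (Hc : commute_in_2 Psi Phi) (X : Poset) (HK : Kprop Phi Psi X) :
  order_iso (LL X) (PhiPoset Phi (PsiPoset Psi X)).
Proof.
  exists (fun th : LL X => (exist _ (exist _ (@fset Psi X th) (@fset_lower Psi X th))
                                  (fset_phi JDf HK th) : PhiPoset Phi (PsiPoset Psi X))).
  exists (fun y : PhiPoset Phi (PsiPoset Psi X) => (exist _ _ (@gset_lower Phi Psi X y) : LL X)).
  split; [| split; [| split]].
  - intros a b hab p hp x hx; exact (hab x (hp x hx)).
  - intros a b hab x [p [hp hx]]; exists p; split; auto; exact (hab p hp).
  - intros th; apply LL_eq; intros z; simpl; split.
    + intros [p [hp hz]]; exact (hp z hz).
    + intros hz. exists (exist _ (down z) (psi_down JDs z)); split.
      * intros y hy; exact (proj2_sig th y z hy hz).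
      * apply le_refl.
  - intros y; apply le_antisym.
    + intros p hp. simpl in hp.
      destruct (compact_lemma JDf Hc (proj2_sig (proj1_sig p)) (proj2_sig p) (proj2_sig y)
                  (g := fun q : PsiPoset Psi X => proj1_sig (proj1_sig q))) as [q [hq hpq]].
      * intros q; exact (proj2_sig (proj1_sig q)).
      * intros q q' h; exact h.
      * intros x hx; exact (hp x hx).
      * exact (proj2_sig (proj1_sig y) p q hpq hq).
    + intros p hp x hx. exists p; split; auto.
Qed.

Lemma continuous_part (Phi Psi : Class) (JDf : JoinDoctrine Phi) (JDs : JoinDoctrine Psi)
  (Hc : commute_in_2 Psi Phi) (HK : forall X, Kprop Phi Psi X) :
  continuous_doctrine Phi.
Proof.
  intros X th. exists (dcl (phiT Psi (proj1_sig th))).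
  split; [apply dcl_lower | split; [apply dcl_phi; [exact JDf | apply HK] | split]].
  - intros B [C [[h1 h2] hBC]] phi Hl Hp s Hj hths.
    destruct (compact_lemma JDf Hc (proj2_sig C) h1 Hp (g := fun y : LL X => proj1_sig y))
      as [D [hD hCD]].
    + intros y; exact (proj2_sig y).
    + intros y y' h; exact h.
    + intros x hx; exact (join_sub Hj (hths x (h2 x hx))).
    + exact (Hl B D (le_trans hBC hCD) hD).
  - intros x hx. exists (down x); split; [| apply le_refl].
    exists (down x); split; [split | apply le_refl].
    + exact (psi_down JDs x).
    + intros y hy; exact (proj2_sig th y x hy hx).
Qed.

Lemma lower_true (X : Poset) : lower (fun _ : X => True).
Proof. intros ? ? ? ?; exact I. Qed.

Lemma star_part (Phi Psi : Class) (JDf : JoinDoctrine Phi) (JDs : JoinDoctrine Psi)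
  (Hc : commute_in_2 Psi Phi)
  (Hii : forall X : Poset, suplattice Psi X ->
      forall A : X -> Prop, (lower A /\ Phi (subposet X A)) <-> ideal Psi A)
  (P : Poset) : Phi P <-> StarClass Psi P.
Proof.
  split.
  - intros HP phi Hl Hp s Hj Hts. apply NNPP; intros Hn.
    assert (HT : Phi (subposet P (fun _ => True))).
    { apply (transfer JDf (f := fun p : P => p)); auto.
      - intros a b h; exact h.
      - intros x _; exists x; apply le_refl. }
    destruct (proj1 (Hc (LL P) P (fun _ => True) phi (@lower_true P) HT Hl Hp
                 (fun B p => ~ proj1_sig B p)
                 ltac:(intros B B' p p' hB'B hpp' hnb hB'p'; apply hnb;
                       exact (proj2_sig B p p' hpp' (hB'B p' hB'p')))))
      as [p [_ hp]].
    + intros B hB. apply NNPP; intros hne. apply Hn.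
      assert (E : B = topL P).
      { apply LL_eq; intros z; simpl; split; [intros; exact I |].
        intros _; apply NNPP; intros hz; apply hne; exists z; split; auto. }
      rewrite <- E; exact hB.
    + destruct (join_sub Hj (Hts p I)) as [B [hB hBp]].
      exact (hp B hB hBp).
  - intros Hst.
    set (A := fun B : LL P => exists p, ~ proj1_sig B p).
    assert (Hsup : suplattice Psi (LL P)).
    { intros S _; exists (Lunion S); apply Lunion_join. }
    assert (HI : ideal Psi A).
    { split.
      - intros a b hab [p hp]; exists p; intros hap; exact (hp (hab p hap)).
      - intros S s HSA HS Hj. apply NNPP; intros Hn.
        destruct (Hst (dcl S) (@dcl_lower (LL P) S) (dcl_phi JDs HS) s) as [C [hC htC]].
        + split.
          * intros B [C [hC hBC]]; exact (le_trans hBC (join_ub Hj hC)).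
          * intros t ht; apply (proj2 Hj); intros C hC; apply ht; exists C; split; auto; apply le_refl.
        + intros x _; apply NNPP; intros hx; apply Hn; exists x; exact hx.
        + destruct (HSA C hC) as [p hp]. exact (hp (htC p I)). }
    destruct (proj2 (Hii (LL P) Hsup A) HI) as [_ HA].
    assert (Hel : forall p : P, lower (fun q => ~ le p q)).
    { intros p a b hab hnb hpa; exact (hnb (le_trans hpa hab)). }
    set (e := fun p : P => (exist _ _ (Hel p) : LL P)).
    assert (he : forall p, A (e p)).
    { intros p; exists p; simpl; intros h; exact (h (le_refl p)). }
    set (N := fun r : subposet (LL P) A => exists p, proj1_sig r = e p).
    assert (HN : Phi (subposet _ N)).
    { apply (jd_cof JDf); [| exact HA].
      intros [B [p hp]]. exists (exist A (e p) (he p)); split.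
      - exists p; reflexivity.
      - intros x hx hpx. apply hp. exact (proj2_sig B p x hpx hx). }
    apply (transfer_full JDf (f := fun r : subposet (subposet (LL P) A) N =>
               proj1_sig (constructive_indefinite_description _ (proj2_sig r)))).
    + intros a b hab.
      destruct (constructive_indefinite_description _ (proj2_sig a)) as [pa ea].
      destruct (constructive_indefinite_description _ (proj2_sig b)) as [pb eb]. simpl.
      apply NNPP; intros hn.
      assert (h1 : proj1_sig (proj1_sig (proj1_sig a)) pb) by (rewrite ea; exact hn).
      pose proof (hab pb h1) as h2.
      assert (h3 : proj1_sig (e pb) pb) by (rewrite <- eb; exact h2).
      exact (h3 (le_refl pb)).
    + intros q. exists (exist N (exist A (e q) (he q)) (ex_intro _ q eq_refl)).
      destruct (constructive_indefinite_description _ _) as [p' ep]. simpl.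
      apply NNPP; intros hn.
      assert (h1 : proj1_sig (e q) p') by exact hn.
      simpl in ep. rewrite ep in h1. exact (h1 (le_refl p')).
    + exact HN.
Qed.

Unset Implicit Arguments.
Set Strict Implicit.

Theorem proposition3p5 (Phi Psi : Class) :
  JoinDoctrine Phi -> JoinDoctrine Psi -> commute_in_2 Psi Phi ->
  let cond_i := forall X : Poset, generated Phi (PhiOf Psi X) in
  let cond_ii := forall X : Poset, suplattice Psi X ->
      forall A : X -> Prop, (lower A /\ Phi (subposet X A)) <-> ideal Psi A in
  let cond_iii := forall X : Poset, exists P : LL X -> Prop,
      closed_joins Psi P /\ (forall x : X, P (down x)) /\
      (forall I : subposet (LL X) P -> Prop, ideal Psi I -> Phi (subposet _ I)) in
  (cond_i <-> cond_ii) /\ (cond_ii <-> cond_iii) /\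
  (cond_i ->
     (forall X : Poset,
        (forall A : LL X, PhiOf Psi X A <-> compact Phi (LL X) A) /\
        (forall A : LL X, compact Phi (LL X) A <-> PhiStar Phi X A) /\
        order_iso (LL X) (PhiPoset Phi (PsiPoset Psi X)) /\
        algebraic Phi (LL X)) /\
     continuous_doctrine Phi /\
     (forall P : Poset, Phi P <-> StarClass Psi P)).
Proof.
  intros JDf JDs Hc cond_i cond_ii cond_iii.
  split; [split | split; [split |]].
  - intros Hi X Hsup A. exact (K_ii JDf JDs Hc (@i_K Phi Psi JDf JDs Hc Hi X) Hsup A).
  - intros Hii X. exact (K_i JDf JDs (@ii_K Phi Psi JDf JDs Hii X)).
  - intros Hii. exact (ii_iii Hii).
  - intros Hiii X Hsup A. exact (K_ii JDf JDs Hc (@iii_K Phi Psi JDf JDs Hiii X) Hsup A).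
  - intros Hi.
    pose proof (i_K JDf JDs Hc Hi) as HK.
    assert (Hii : cond_ii) by (intros X Hsup A; exact (K_ii JDf JDs Hc (HK X) Hsup A)).
    split; [| split].
    + intros X. split; [| split; [| split]].
      * intros A; exact (psi_compact JDf JDs Hc (HK X) A).
      * intros A; apply iff_refl.
      * exact (iso_part JDf JDs Hc (HK X)).
      * split.
        -- intros S _; exists (Lunion S); apply Lunion_join.
        -- intros T HT Hcl.
           exact (K_i JDf JDs (HK X) (T := T)
                    (fun A hA => HT A (proj1 (psi_compact JDf JDs Hc (HK X) A) hA)) Hcl).
    + exact (continuous_part JDf JDs Hc HK).
    + intros P; exact (star_part JDf JDs Hc Hii P).
Qed.
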